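(* Let $\gamma>0$, $y>0$ and $x_1\ge0$ be real numbers with $y+4x_1<1$. Then the function $\sigma\mapsto I_{y,x_1}(\sigma)$ is strictly increasing on its domain $\{\sigma\ge0: y+4x_1+\sigma/\gamma<1\}$.
   Context: $E(x)=-x\log_qx-(1-x)\log_q(1-x)$ for $0<x<1$, $E(0)=E(1)=0$. $S(\sigma,y,x,t_1)=E(t_1)+(1-t_1)E\bigl(\frac{y+x+t_1}{1-t_1}\bigr)+Z$, where $Z=(y+\sigma/\gamma+t_1)E\bigl(\frac{y+x+t_1}{y+\sigma/\gamma+t_1}\bigr)$ if $\frac{y+x+t_1}{y+\sigma/\gamma+t_1}\ge1-\frac1q$ and $Z=(y+\sigma/\gamma+t_1)-(y+x+t_1)\log_q(q-1)$ otherwise. $I_{y,x_1}(\sigma)=\max S(\sigma,y,x,t_1)$ over real $0\le t_1\le2x_1$, $0\le x\le\sigma/\gamma$. *)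

(* Defs.v *)
From Stdlib Require Import Reals.
From Coquelicot Require Import Coquelicot.
Open Scope R_scope.

Definition logq (q : nat) (x : R) : R := ln x / ln (INR q).

(* q-ary entropy: E(x) = -x log_q x - (1-x) log_q (1-x) for 0<x<1,
   E(0)=E(1)=0 (and, by convention, 0 outside [0,1], never used). *)
Definition Ent (q : nat) (x : R) : R :=
  if Rlt_dec 0 x then
    if Rlt_dec x 1 then - x * logq q x - (1 - x) * logq q (1 - x) else 0
  else 0.

Definition Zterm (q : nat) (gamma sigma y x t1 : R) : R :=
  let a := y + x + t1 in
  let b := y + sigma / gamma + t1 in
  if Rle_dec (1 - 1 / INR q) (a / b) then b * Ent q (a / b)
  else b - a * logq q (INR q - 1).

Definition Sfun (q : nat) (gamma sigma y x t1 : R) : R :=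
  Ent q t1 + (1 - t1) * Ent q ((y + x + t1) / (1 - t1))
  + Zterm q gamma sigma y x t1.

(* I_{y,x1}(sigma) = max of S over 0 <= t1 <= 2 x1, 0 <= x <= sigma/gamma,
   formalized as the supremum of the set of attained values. *)
Definition Ifun (q : nat) (gamma y x1 sigma : R) : R :=
  real (Lub_Rbar (fun v => exists x t1,
    0 <= t1 <= 2 * x1 /\ 0 <= x <= sigma / gamma /\
    v = Sfun q gamma sigma y x t1)).

(* Main.v *)
Require Import Defs.
From Stdlib Require Import Reals Lra Lia.
From Coquelicot Require Import Coquelicot.
Open Scope R_scope.

Lemma ln_le_m1 x : 0 < x -> ln x <= x - 1.
Proof. intro H. pose proof (exp_ineq1_le (ln x)). rewrite exp_ln in H0; lra. Qed.

Lemma q_facts q : (2 <= q)%nat -> 2 <= INR q /\ 0 < ln (INR q) /\ 0 <= ln (INR q - 1)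
   /\ ln (INR q - 1) <= ln (INR q).
Proof.
  intro Hq. assert (H2: 2 <= INR q) by (replace 2 with (INR 2) by (simpl; lra); apply le_INR; lia).
  repeat split; auto.
  - rewrite <- ln_1. apply ln_increasing; lra.
  - rewrite <- ln_1. apply ln_le; lra.
  - apply ln_le; lra.
Qed.

Lemma Ent_ln q p : (2 <= q)%nat -> 0 < p < 1 ->
  Ent q p * ln (INR q) = - p * ln p - (1 - p) * ln (1 - p).
Proof.
  intros Hq Hp. destruct (q_facts q Hq) as (_ & Hl & _).
  unfold Ent, logq. destruct (Rlt_dec 0 p); [|lra]. destruct (Rlt_dec p 1); [|lra].
  field. lra.
Qed.

Lemma gibbs q p : (2 <= q)%nat -> 0 < p <= 1 -> Ent q p <= 1 - p * logq q (INR q - 1).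
Proof.
  intros Hq Hp. destruct (q_facts q Hq) as (H2 & Hl & Hl1 & Hl2).
  unfold logq.
  destruct (Req_dec p 1) as [E|E].
  - subst. unfold Ent. destruct (Rlt_dec 0 1); [|lra]. destruct (Rlt_dec 1 1); [lra|].
    apply Rmult_le_reg_r with (ln (INR q)); auto. field_simplify; try lra.
  - apply Rmult_le_reg_r with (ln (INR q)); auto. rewrite Ent_ln; auto; [|lra].
    replace ((1 - p * (ln (INR q - 1) / ln (INR q))) * ln (INR q))
      with (ln (INR q) - p * ln (INR q - 1)) by (field; lra).
    pose proof (ln_le_m1 ((INR q - 1) / (p * INR q))) as A.
    pose proof (ln_le_m1 (1 / ((1 - p) * INR q))) as B.
    assert (P1: 0 < p * INR q) by (apply Rmult_lt_0_compat; lra).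
    assert (P2: 0 < (1-p) * INR q) by (apply Rmult_lt_0_compat; lra).
    assert (P3: 0 < (INR q - 1) / (p * INR q)) by (apply Rdiv_lt_0_compat; lra).
    assert (P4: 0 < 1 / ((1 - p) * INR q)) by (apply Rdiv_lt_0_compat; lra).
    specialize (A P3). specialize (B P4).
    rewrite ln_div in A by lra. rewrite ln_mult in A by lra.
    rewrite ln_div in B by lra. rewrite ln_mult in B by lra. rewrite ln_1 in B.
    assert (HA: p * (ln (INR q - 1) - (ln p + ln (INR q))) <= p * ((INR q - 1) / (p * INR q) - 1))
      by (apply Rmult_le_compat_l; lra).
    assert (HB: (1-p) * (0 - (ln (1-p) + ln (INR q))) <= (1-p) * (1 / ((1 - p) * INR q) - 1))
      by (apply Rmult_le_compat_l; lra).
    assert (K: p * ((INR q - 1) / (p * INR q) - 1) + (1-p) * (1 / ((1 - p) * INR q) - 1) = 0)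
      by (field; lra).
    lra.
Qed.
Lemma bent q a b : (2 <= q)%nat -> 0 < a <= b ->
  b * Ent q (a/b) * ln (INR q) = - a * (ln a - ln b) - (b - a) * (ln (b - a) - ln b).
Proof.
  intros Hq Hab. destruct (Req_dec a b) as [E|E].
  - subst. replace (b/b) with 1 by (field; lra). unfold Ent.
    destruct (Rlt_dec 0 1); [|lra]. destruct (Rlt_dec 1 1); [lra|]. ring.
  - rewrite Rmult_assoc, Ent_ln; auto.
    2: split; [apply Rdiv_lt_0_compat; lra| apply Rmult_lt_reg_r with b; [lra|]; unfold Rdiv; rewrite Rmult_assoc, Rinv_l; lra].
    rewrite ln_div by lra. replace (1 - a/b) with ((b-a)/b) by (field; lra).
    rewrite ln_div by lra. field. lra.
Qed.

Definition zf q a b := if Rle_dec (1 - 1 / INR q) (a / b) then b * Ent q (a / b)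
  else b - a * logq q (INR q - 1).

Lemma entent q a b d : (2 <= q)%nat -> 0 < a <= b -> 0 < d ->
  1 - 1 / INR q <= a / (b + d) ->
  (b + d) * Ent q (a / (b + d)) >= b * Ent q (a / b) + d.
Proof.
  intros Hq Hab Hd Hp. destruct (q_facts q Hq) as (H2 & Hl & Hl1 & Hl2).
  apply Rle_ge, Rmult_le_reg_r with (ln (INR q)); auto.
  rewrite Rmult_plus_distr_r, bent, bent; auto; try lra.
  set (b' := b + d). set (c := b - a). set (c' := b' - a).
  assert (Eb: b' = b + d) by reflexivity. assert (Ec: c = b - a) by reflexivity. assert (Ec': c' = b' - a) by reflexivity.
  clearbody b' c c'. rewrite <- Eb in Hp.
  assert (Hc' : c' = c + d) by lra.
  assert (Hb' : 0 < b') by (lra).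
  assert (Hq1: INR q <= b' / c').
  { assert (c' / b' <= 1 / INR q).
    { replace (c'/b') with (1 - a/b') by (rewrite Ec'; field; lra). lra. }
    assert (0 < c') by (lra).
    apply Rmult_le_reg_r with (c' / b' * / INR q).
    apply Rmult_lt_0_compat; [apply Rdiv_lt_0_compat; lra| apply Rinv_0_lt_compat; lra].
    replace (b' / c' * (c' / b' * / INR q)) with (/ INR q) by (field; lra).
    replace (INR q * (c' / b' * / INR q)) with (c'/b') by (field; lra). lra. }
  assert (Hc'p : 0 < c') by (lra).
  assert (H3: ln (INR q) <= ln b' - ln c').
  { rewrite <- ln_div by lra. apply ln_le; lra. }
  assert (H3': d * ln (INR q) <= d * (ln b' - ln c')) by (apply Rmult_le_compat_l; lra).
  assert (H1: ln b - ln b' <= b / b' - 1).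
  { rewrite <- ln_div by lra. apply ln_le_m1. apply Rdiv_lt_0_compat; lra. }
  assert (H12: 0 <= a * (ln b' - ln b) + c * ((ln b' - ln c') - (ln b - ln c))).
  { destruct (Req_dec c 0) as [E|E].
    - rewrite E. assert (0 <= a * (ln b' - ln b)).
      { apply Rmult_le_pos; try lra. assert (b / b' <= 1).
        { apply Rmult_le_reg_r with b'; auto. field_simplify; lra. } lra. }
      lra.
    - assert (Hc: 0 < c) by (lra).
      assert (H2': ln c' + ln b - ln b' - ln c <= c' * b / (b' * c) - 1).
      { replace (ln c' + ln b - ln b' - ln c) with (ln (c' * b / (b' * c))).
        apply ln_le_m1. apply Rdiv_lt_0_compat; apply Rmult_lt_0_compat; lra.
        rewrite ln_div, !ln_mult; try lra; apply Rmult_lt_0_compat; lra. }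
      assert (A1: a * (1 - b / b') <= a * (ln b' - ln b)) by (apply Rmult_le_compat_l; lra).
      assert (A2: c * (1 - c' * b / (b' * c)) <= c * ((ln b' - ln c') - (ln b - ln c)))
        by (apply Rmult_le_compat_l; lra).
      assert (K: a * (1 - b / b') + c * (1 - c' * b / (b' * c)) = 0).
      { rewrite Hc', Ec, Eb. field. split; lra. }
      lra. }
  replace (c' * (ln c' - ln b')) with ((c+d) * (ln c' - ln b')) by (rewrite Hc'; ring).
  set (X := a * (ln b' - ln b) + c * (ln b' - ln c' - (ln b - ln c))) in *.
  set (Y := d * (ln b' - ln c')) in *. set (W := d * ln (INR q)) in *.
  apply Rge_le, Rminus_ge. match goal with |- ?e >= 0 => replace e with (X+Y-W) by (unfold X,Y,W; ring) end. lra.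
Qed.

Lemma logq_nonneg q : (2 <= q)%nat -> 0 <= logq q (INR q - 1).
Proof.
  intro Hq. destruct (q_facts q Hq) as (H2 & Hl & Hl1 & Hl2). unfold logq, Rdiv.
  apply Rmult_le_pos; auto. left; apply Rinv_0_lt_compat; auto.
Qed.

Lemma Ent_le1 q p : (2 <= q)%nat -> Ent q p <= 1.
Proof.
  intro Hq. pose proof (logq_nonneg q Hq).
  destruct (Rlt_dec 0 p); [| unfold Ent; destruct (Rlt_dec 0 p); lra].
  destruct (Rlt_dec p 1); [| unfold Ent; destruct (Rlt_dec 0 p); destruct (Rlt_dec p 1); lra].
  pose proof (gibbs q p Hq (conj r (Rlt_le _ _ r0))).
  assert (0 <= p * logq q (INR q - 1)) by (apply Rmult_le_pos; lra). lra.
Qed.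

Lemma zinc q a b d : (2 <= q)%nat -> 0 < a <= b -> 0 < d ->
  zf q a (b + d) >= zf q a b + d.
Proof.
  intros Hq Hab Hd. unfold zf.
  assert (Hm: a / (b + d) <= a / b).
  { unfold Rdiv. apply Rmult_le_compat_l; [lra|]. apply Rinv_le_contravar; lra. }
  destruct (Rle_dec (1 - 1 / INR q) (a / (b + d))) as [H1|H1];
  destruct (Rle_dec (1 - 1 / INR q) (a / b)) as [H2|H2].
  - apply entent; auto.
  - lra.
  - assert (Hp: 0 < a / b <= 1).
    { split. apply Rdiv_lt_0_compat; lra.
      apply Rmult_le_reg_r with b; [lra|]. unfold Rdiv; rewrite Rmult_assoc, Rinv_l; lra. }
    pose proof (gibbs q (a/b) Hq Hp) as G.
    assert (b * Ent q (a / b) <= b * (1 - a / b * logq q (INR q - 1))) by (apply Rmult_le_compat_l; lra).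
    replace (b * (1 - a / b * logq q (INR q - 1))) with (b - a * logq q (INR q - 1)) in H by (field; lra).
    lra.
  - lra.
Qed.

Lemma zf_le q a b : (2 <= q)%nat -> 0 < a -> 0 < b -> zf q a b <= b.
Proof.
  intros Hq Ha Hb. pose proof (logq_nonneg q Hq). unfold zf.
  destruct (Rle_dec (1 - 1 / INR q) (a / b)).
  - pose proof (Ent_le1 q (a/b) Hq).
    assert (b * Ent q (a / b) <= b * 1) by (apply Rmult_le_compat_l; lra). lra.
  - assert (0 <= a * logq q (INR q - 1)) by (apply Rmult_le_pos; lra). lra.
Qed.

Lemma Zterm_zf q gamma sigma y x t1 :
  Zterm q gamma sigma y x t1 = zf q (y + x + t1) (y + sigma / gamma + t1).
Proof. reflexivity. Qed.

Lemma Sbound q gamma y x1 sigma x t1 : (2 <= q)%nat -> 0 < gamma -> 0 < y -> 0 <= x1 ->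
  0 <= sigma -> y + 4 * x1 + sigma / gamma < 1 ->
  0 <= t1 <= 2 * x1 -> 0 <= x <= sigma / gamma -> Sfun q gamma sigma y x t1 <= 3.
Proof.
  intros Hq Hg Hy Hx1 Hs Hc Ht Hx. unfold Sfun. rewrite Zterm_zf.
  assert (0 <= sigma / gamma) by (unfold Rdiv; apply Rmult_le_pos; [lra| left; apply Rinv_0_lt_compat; lra]).
  pose proof (zf_le q (y + x + t1) (y + sigma / gamma + t1) Hq ltac:(lra) ltac:(lra)).
  pose proof (Ent_le1 q t1 Hq). pose proof (Ent_le1 q ((y + x + t1) / (1 - t1)) Hq).
  assert ((1 - t1) * Ent q ((y + x + t1) / (1 - t1)) <= (1 - t1) * 1) by (apply Rmult_le_compat_l; lra).
  lra.
Qed.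

Lemma lub_lt (E1 E2 : R -> Prop) (d M : R) : 0 < d ->
  (exists v, E1 v) -> (forall v, E2 v -> v <= M) ->
  (forall v, E1 v -> exists w, E2 w /\ v + d <= w) ->
  real (Lub_Rbar E1) < real (Lub_Rbar E2).
Proof.
  intros Hd [v0 Hv0] HM Hg.
  destruct (Lub_Rbar_correct E1) as [u1 l1].
  destruct (Lub_Rbar_correct E2) as [u2 l2].
  destruct (Hg v0 Hv0) as [w0 [Hw0 _]].
  assert (A2: Rbar_le (Lub_Rbar E2) M) by (apply l2; intros v Hv; simpl; apply HM; auto).
  assert (B2: Rbar_le w0 (Lub_Rbar E2)) by (apply u2; auto).
  destruct (Lub_Rbar E2) as [r2| |]; simpl in A2, B2; try contradiction.
  assert (A1: Rbar_le (Lub_Rbar E1) (r2 - d)).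
  { apply l1. intros v Hv. simpl. destruct (Hg v Hv) as [w [Hw Hvw]].
    pose proof (u2 w Hw). simpl in H. lra. }
  assert (B1: Rbar_le v0 (Lub_Rbar E1)) by (apply u1; auto).
  destruct (Lub_Rbar E1) as [r1| |]; simpl in A1, B1; try contradiction. simpl. lra.
Qed.

Theorem lemma4p7 (q : nat) (gamma y x1 : R) :
  (2 <= q)%nat -> 0 < gamma -> 0 < y -> 0 <= x1 -> y + 4 * x1 < 1 ->
  forall s1 s2 : R,
    0 <= s1 -> y + 4 * x1 + s1 / gamma < 1 ->
    0 <= s2 -> y + 4 * x1 + s2 / gamma < 1 ->
    s1 < s2 -> Ifun q gamma y x1 s1 < Ifun q gamma y x1 s2.
Proof.
  intros Hq Hg Hy Hx1 H4 s1 s2 Hs1 Hc1 Hs2 Hc2 Hlt.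
  assert (P1: 0 <= s1 / gamma) by (unfold Rdiv; apply Rmult_le_pos; [lra| left; apply Rinv_0_lt_compat; lra]).
  assert (Hd: 0 < (s2 - s1) / gamma) by (apply Rdiv_lt_0_compat; lra).
  assert (E2: s2 / gamma = s1 / gamma + (s2 - s1) / gamma) by (field; lra).
  unfold Ifun. apply lub_lt with ((s2 - s1) / gamma) 3; auto.
  - exists (Sfun q gamma s1 y 0 0). exists 0, 0. repeat split; lra.
  - intros v (x & t1 & Ht & Hx & ->). apply (Sbound q gamma y x1 s2 x t1); auto.
  - intros v [x [t1 [Ht [Hx Hv]]]]; subst v. exists (Sfun q gamma s2 y x t1). split.
    + exists x, t1. repeat split; lra.
    + unfold Sfun. rewrite !Zterm_zf.
      replace (y + s2 / gamma + t1) with ((y + s1 / gamma + t1) + (s2 - s1) / gamma) by lra.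
      pose proof (zinc q (y + x + t1) (y + s1 / gamma + t1) ((s2 - s1) / gamma) Hq ltac:(lra) Hd).
      lra.
Qed.
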